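(* There exists a semifilter $\mathcal{T}$ that is homeomorphic to $\mathbf{T}$, where $\mathbf{T}$ is the (unique up to homeomorphism) zero-dimensional space that is the union of a completely metrizable subspace and a countable subspace, is nowhere $\sigma$-compact, and is nowhere completely metrizable.
   Context: All spaces are separable metrizable. For a topological property $\mathcal{P}$, a space $X$ is nowhere $\mathcal{P}$ if $X$ is non-empty and no non-empty open subspace of $X$ has $\mathcal{P}$. It is known (van Douwen) that a zero-dimensional space with the three listed properties is unique up to homeomorphism; this space is denoted $\mathbf{T}$. A semifilter (on $\omega$) is a collection $\mathcal{S}\subseteq\mathcal{P}(\omega)$ such that $\varnothing\notin\mathcal{S}$, $\omega\in\mathcal{S}$, $\mathcal{S}$ is closed under finite modifications, and $\mathcal{S}$ is upward-closed; it is viewed as a subspace of $2^\omega$ via characteristic functions. *)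

(* Defs.v *)
(* point-set topology of subspaces of the Cantor space 2^omega,
   developed concretely. Every space here is a subspace of 2^omega
   (hence separable metrizable). *)
From Stdlib Require Import Reals List.
Open Scope R_scope.

(* points of the Cantor space 2^omega = characteristic functions of subsets of omega *)
Definition pt := nat -> bool.
Definition subspace := pt -> Prop.

(* x and y agree on the first n coordinates (basic clopen nbhds of 2^omega) *)
Definition agree (x y : pt) (n : nat) : Prop := forall i, (i < n)%nat -> x i = y i.

Definition subset (A B : subspace) : Prop := forall x, A x -> B x.

Definition rel_open (X U : subspace) : Prop :=
  subset U X /\
  forall x, U x -> exists n, forall y, X y -> agree x y n -> U y.

Definition rel_closed (X U : subspace) : Prop :=
  subset U X /\ rel_open X (fun y => X y /\ ~ U y).

Definition rel_clopen (X U : subspace) : Prop := rel_open X U /\ rel_closed X U.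

Definition zero_dimensional (X : subspace) : Prop :=
  forall U x, rel_open X U -> U x ->
    exists V, rel_clopen X V /\ V x /\ subset V U.

Definition nonempty (X : subspace) : Prop := exists x, X x.

Definition open_set (U : subspace) : Prop := rel_open (fun _ => True) U.

Definition compact (K : subspace) : Prop :=
  forall (I : Type) (U : I -> subspace),
    (forall i, open_set (U i)) ->
    (forall x, K x -> exists i, U i x) ->
    exists l : list I, forall x, K x -> exists i, In i l /\ U i x.

Definition sigma_compact (X : subspace) : Prop :=
  exists K : nat -> subspace,
    (forall n, compact (K n)) /\ (forall x, X x <-> exists n, K n x).

Definition countable (C : subspace) : Prop :=
  exists f : nat -> pt, forall x, C x -> exists n, f n = x.

Definition completely_metrizable (X : subspace) : Prop :=
  exists d : pt -> pt -> R,
    (forall x y, X x -> X y -> 0 <= d x y) /\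
    (forall x y, X x -> X y -> (d x y = 0 <-> x = y)) /\
    (forall x y, X x -> X y -> d x y = d y x) /\
    (forall x y z, X x -> X y -> X z -> d x z <= d x y + d y z) /\
    (forall x, X x -> forall eps, 0 < eps ->
        exists n, forall y, X y -> agree x y n -> d x y < eps) /\
    (forall x, X x -> forall n,
        exists eps, 0 < eps /\ forall y, X y -> d x y < eps -> agree x y n) /\
    (forall s : nat -> pt, (forall k, X (s k)) ->
       (forall eps, 0 < eps -> exists N, forall m k, (m >= N)%nat -> (k >= N)%nat ->
            d (s m) (s k) < eps) ->
       exists l, X l /\ forall eps, 0 < eps -> exists N, forall k, (k >= N)%nat ->
            d (s k) l < eps).

Definition nowhere (P : subspace -> Prop) (X : subspace) : Prop :=
  nonempty X /\ forall U, rel_open X U -> nonempty U -> ~ P U.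

(* The defining properties of van Douwen's space T (unique up to homeomorphism
   among zero-dimensional separable metrizable spaces) *)
Definition is_T (X : subspace) : Prop :=
  zero_dimensional X /\
  (exists G C, completely_metrizable G /\ countable C /\
     forall x, X x <-> (G x \/ C x)) /\
  nowhere sigma_compact X /\
  nowhere completely_metrizable X.

(* semifilter on omega, viewed as a subspace of 2^omega via characteristic functions *)
Definition semifilter (S : subspace) : Prop :=
  ~ S (fun _ => false) /\
  S (fun _ => true) /\
  (forall x y, S x -> (exists N, forall n, (n >= N)%nat -> x n = y n) -> S y) /\
  (forall x y, S x -> (forall n, x n = true -> y n = true) -> S y).

(* Main.v *)
Require Import Defs.
From Stdlib Require Import Reals List.
From Stdlib Require Import Lia Lra Arith Classical ClassicalEpsilon FunctionalExtensionality Wf_nat.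

Definition Ginf (x:pt) := forall N, exists i, (N <= i)%nat /\ Nat.even i = true /\ x i = true.
Definition Ccof (x:pt) :=
  (exists N, forall i, (N<=i)%nat -> Nat.even i = true -> x i = false) /\
  (exists N, forall i, (N<=i)%nat -> Nat.even i = false -> x i = true).
Definition SS (x:pt) := Ginf x \/ Ccof x.

Lemma even_double n : Nat.even (2*n) = true.
Proof. rewrite Nat.even_mul; reflexivity. Qed.
Lemma odd_double n : Nat.even (S (2*n)) = false.
Proof. rewrite Nat.even_succ, <- Nat.negb_even, even_double; reflexivity. Qed.

Lemma sf : semifilter SS.
Proof.
  split; [|split; [|split]].
  - intros [H|[_ [N H]]].
    + destruct (H 0%nat) as (i&_&_&Hi); discriminate.
    + specialize (H (S (2*N)) ltac:(lia) (odd_double N)); discriminate.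
  - left; intro N; exists (2*N)%nat; split; [lia|split; [apply even_double|reflexivity]].
  - intros x y Hx [N0 HN0]. destruct Hx as [H|[[N1 H1] [N2 H2]]].
    + left; intro N. destruct (H (Nat.max N N0)) as (i&Hi1&Hi2&Hi3).
      exists i; split; [lia|split; auto]. rewrite <- HN0 by lia; auto.
    + right; split.
      * exists (Nat.max N1 N0); intros i Hi He; rewrite <- HN0 by lia; apply H1; auto; lia.
      * exists (Nat.max N2 N0); intros i Hi He; rewrite <- HN0 by lia; apply H2; auto; lia.
  - intros x y Hx Hxy. destruct Hx as [H|[_ [N2 H2]]].
    + left; intro N; destruct (H N) as (i&?&?&?); exists i; auto.
    + destruct (classic (Ginf y)) as [G|G]; [left; auto|right; split].
      * apply not_all_ex_not in G; destruct G as [N G]; exists N; intros i Hi He.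
        destruct (y i) eqn:E; auto. exfalso; apply G; exists i; auto.
      * exists N2; intros; apply Hxy, H2; auto.
Qed.

Lemma zd (X : subspace) : zero_dimensional X.
Proof.
  intros U x [HUX HU] Ux. destruct (HU x Ux) as [n Hn].
  exists (fun y => X y /\ agree x y n). split; [split; [split|split; [|split]]|split].
  - intros y [? ?]; auto.
  - intros y [Xy Ay]; exists n; intros z Xz Az; split; auto.
    intros i Hi; rewrite Ay, Az; auto.
  - intros y [? ?]; auto.
  - intros y [? ?]; auto.
  - intros y [Xy Ny]; exists n; intros z Xz Az; split; auto.
    intros [_ Az']; apply Ny; split; auto. intros i Hi; rewrite Az', Az; auto.
  - split; auto; intros i Hi; auto.
  - intros y [Xy Ay]; apply Hn; auto.
Qed.

Lemma code_exists (b : nat -> bool) L :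
  (forall i, (L <= i)%nat -> b i = false) -> exists c, forall i, Nat.testbit c i = b i.
Proof.
  intros HL.
  assert (forall L', exists c, forall i, Nat.testbit c i = ((i <? L') && b i)%bool) as H.
  { induction L' as [|L' [c Hc]].
    - exists 0%nat; intros i; rewrite Nat.bits_0; reflexivity.
    - destruct (b L') eqn:E.
      + exists (Nat.lor c (2^L')); intros i; rewrite Nat.lor_spec, Hc, Nat.pow2_bits_eqb.
        destruct (Nat.eq_dec L' i) as [Heq|Hne].
        * subst L'; rewrite Nat.eqb_refl, E, Bool.orb_true_r; symmetry; apply Bool.andb_true_iff;
          split; [apply Nat.ltb_lt; lia|auto].
        * apply Nat.eqb_neq in Hne; rewrite Hne, Bool.orb_false_r.
          apply Nat.eqb_neq in Hne.
          destruct (i <? L') eqn:E1, (i <? S L') eqn:E2; auto;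
           apply Nat.ltb_lt in E1 || apply Nat.ltb_ge in E1;
           apply Nat.ltb_lt in E2 || apply Nat.ltb_ge in E2; lia.
      + exists c; intros i; rewrite Hc.
        destruct (Nat.eq_dec L' i) as [Heq|Hne]; [subst L'; rewrite E, !Bool.andb_false_r; auto|].
        destruct (i <? L') eqn:E1, (i <? S L') eqn:E2; auto;
           apply Nat.ltb_lt in E1 || apply Nat.ltb_ge in E1;
           apply Nat.ltb_lt in E2 || apply Nat.ltb_ge in E2; lia. }
  destruct (H L) as [c Hc]; exists c; intros i; rewrite Hc.
  destruct (i <? L) eqn:E; auto. apply Nat.ltb_ge in E; rewrite HL; auto.
Qed.

Lemma ccount : countable Ccof.
Proof.
  exists (fun c i => xorb (negb (Nat.even i)) (Nat.testbit c i)).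
  intros x [[N1 H1] [N2 H2]].
  destruct (code_exists (fun i => xorb (negb (Nat.even i)) (x i)) (Nat.max N1 N2)) as [c Hc].
  - intros i Hi. destruct (Nat.even i) eqn:E; simpl.
    + apply H1; auto; lia.
    + rewrite H2; auto; lia.
  - exists c; apply functional_extensionality; intro i; rewrite Hc.
    destruct (Nat.even i), (x i); reflexivity.
Qed.

Lemma least_nat (P : nat -> Prop) : (exists n, P n) -> exists m, P m /\ forall k, P k -> (m <= k)%nat.
Proof.
  intros H. destruct (dec_inh_nat_subset_has_unique_least_element P (fun n => classic (P n)) H)
    as [m [[Hm1 Hm2] _]]. eauto.
Qed.

Fixpoint evs (x:pt) (L:nat) : nat :=
  match L with 0 => 0%nat | S L' => (evs x L' + (if (Nat.even L' && x L')%bool then 1 else 0))%nat end.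

Lemma evs_S x L : evs x (S L) = (evs x L + (if (Nat.even L && x L)%bool then 1 else 0))%nat.
Proof. reflexivity. Qed.

Lemma evs_mono x a b : (a <= b)%nat -> (evs x a <= evs x b)%nat.
Proof. induction 1; simpl; auto. lia. Qed.

Lemma evs_agree x y L : agree x y L -> evs x L = evs y L.
Proof.
  induction L; simpl; auto. intros H. rewrite IHL by (intros i Hi; apply H; lia).
  rewrite (H L) by lia. reflexivity.
Qed.

Lemma evs_le x L : (evs x L <= L)%nat.
Proof. induction L; simpl; auto. destruct (_ && _)%bool; lia. Qed.

Lemma evs_lt_ex x a b : (evs x a < evs x b)%nat ->
  exists i, (a <= i < b)%nat /\ Nat.even i = true /\ x i = true.
Proof.
  induction b; intros H.
  - simpl in H; lia.
  - simpl in H. destruct (Nat.le_gt_cases a b) as [Hab|Hab].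
    + destruct (Nat.even b && x b)%bool eqn:E.
      * apply Bool.andb_true_iff in E; exists b; split; [lia|tauto].
      * destruct IHb as (i&?&?&?); [lia|]. exists i; split; [lia|auto].
    + assert (evs x (S b) <= evs x a)%nat by (apply evs_mono; lia). simpl in H0; lia.
Qed.

Lemma evs_half x N : (evs x (2*N) <= N)%nat.
Proof.
  induction N; [simpl; lia|]. replace (2 * S N)%nat with (S (S (2*N)))%nat by lia.
  rewrite !evs_S, odd_double. simpl andb. destruct (_ && _)%bool; lia.
Qed.

Lemma Ginf_evs x : Ginf x -> forall n, exists L, (n <= evs x L)%nat.
Proof.
  intros G n; induction n. exists 0%nat; simpl; lia.
  destruct IHn as [L HL]. destruct (G L) as (i&Hi&He&Hx).
  exists (S i); simpl. rewrite He, Hx; simpl.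
  assert (evs x L <= evs x i)%nat by (apply evs_mono; auto). lia.
Qed.

Lemma evs_Ginf x : (forall n, exists L, (n <= evs x L)%nat) -> Ginf x.
Proof.
  intros H N. destruct (H (S N)) as [L HL].
  pose proof (evs_half x N).
  destruct (evs_lt_ex x (2*N) L) as (i&Hi&?&?); [lia|].
  exists i; split; [lia|auto].
Qed.

Definition RR (n:nat) (x y : pt) := exists L, agree x y L /\ (n <= evs x L)%nat.

Lemma RR_agree n x y : RR n x y -> agree x y n.
Proof. intros [L [HA HL]] i Hi. apply HA. pose proof (evs_le x L); lia. Qed.

Lemma RR_sym n x y : RR n x y -> RR n y x.
Proof. intros [L [HA HL]]. exists L; split. intros i Hi; symmetry; auto.
  rewrite <- (evs_agree x y L HA); auto. Qed.

Lemma agree_mono x y a b : (a <= b)%nat -> agree x y b -> agree x y a.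
Proof. intros H A i Hi; apply A; lia. Qed.

Lemma agree_trans x y z n : agree x y n -> agree y z n -> agree x z n.
Proof. intros A B i Hi; rewrite A, B; auto. Qed.

Lemma agree_sym x y n : agree x y n -> agree y x n.
Proof. intros A i Hi; symmetry; auto. Qed.

Lemma RR_trans n x y z : RR n x y -> RR n y z -> RR n x z.
Proof.
  intros [L1 [A1 H1]] [L2 [A2 H2]]. exists (Nat.min L1 L2). split.
  - apply (agree_trans _ y); [apply (agree_mono _ _ _ L1)|apply (agree_mono _ _ _ L2)]; auto; lia.
  - rewrite (evs_agree x y (Nat.min L1 L2)) by (apply (agree_mono _ _ _ L1); auto; lia).
    rewrite (evs_agree x y L1 A1) in H1.
    destruct (Nat.le_ge_cases L1 L2).
    + rewrite Nat.min_l; auto.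
    + rewrite Nat.min_r; auto.
Qed.

Lemma RR_le m n x y : (m <= n)%nat -> RR n x y -> RR m x y.
Proof. intros H [L [A HL]]; exists L; split; auto; lia. Qed.

Lemma RR_refl n x : (exists L, (n <= evs x L)%nat) -> RR n x x.
Proof. intros [L HL]; exists L; split; auto; intros i _; reflexivity. Qed.

Lemma half_pos n : (0 < (/2)^n)%R.
Proof. apply pow_lt; lra. Qed.

Lemma half_lt n m : (n < m)%nat -> ((/2)^m < (/2)^n)%R.
Proof.
  induction 1.
  - simpl. pose proof (half_pos n); lra.
  - simpl. pose proof (half_pos m); lra.
Qed.

Lemma half_le n m : (n <= m)%nat -> ((/2)^m <= (/2)^n)%R.
Proof. intros H; destruct (Nat.eq_dec n m) as [->|]; [lra|]. left; apply half_lt; lia. Qed.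

Lemma half_lt_inv n m : ((/2)^m < (/2)^n)%R -> (n < m)%nat.
Proof. intros H. destruct (Nat.lt_ge_cases n m); auto. apply half_le in H0; lra. Qed.

Lemma half_small eps : (0 < eps)%R -> exists n, ((/2)^n < eps)%R.
Proof.
  intros He. destruct (pow_lt_1_zero (/2) ltac:(rewrite Rabs_pos_eq; lra) eps He) as [N HN].
  exists N. specialize (HN N (le_n _)). rewrite Rabs_pos_eq in HN; auto. left; apply half_pos.
Qed.

Definition dG (x y : pt) : R :=
  match excluded_middle_informative (exists n, ~ RR n x y) with
  | left H => (/2)^(proj1_sig (constructive_indefinite_description _
                     (least_nat (fun n => ~ RR n x y) H)))
  | right _ => 0%R
  end.

Lemma dG_lt x y n : (dG x y < (/2)^n)%R <-> RR n x y.
Proof.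
  unfold dG. destruct excluded_middle_informative as [H|H].
  - destruct constructive_indefinite_description as [m [Hm1 Hm2]]; simpl.
    split.
    + intros Hlt. apply half_lt_inv in Hlt. apply NNPP; intro C. specialize (Hm2 n C); lia.
    + intros Hr. apply half_lt. destruct (Nat.lt_ge_cases n m); auto.
      exfalso; apply Hm1; eapply RR_le; eauto.
  - split; intros _. apply NNPP; intro C; apply H; eauto. apply half_pos.
Qed.

Lemma dG_cases x y : dG x y = 0%R \/ exists c, dG x y = ((/2)^c)%R /\ ~ RR c x y.
Proof.
  unfold dG. destruct excluded_middle_informative as [H|H]; auto.
  destruct constructive_indefinite_description as [m [Hm1 Hm2]]; simpl. right; eauto.
Qed.

Lemma dG_nonneg x y : (0 <= dG x y)%R.
Proof. destruct (dG_cases x y) as [->|[c [-> _]]]; [lra|left; apply half_pos]. Qed.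

Lemma dG_ge x y c : ~ RR c x y -> ((/2)^c <= dG x y)%R.
Proof. intros H. apply Rnot_lt_le; intro C; apply H, dG_lt; auto. Qed.

Lemma dG_zero x y : dG x y = 0%R <-> forall n, RR n x y.
Proof.
  split.
  - intros H n; apply dG_lt; rewrite H; apply half_pos.
  - intros H. destruct (dG_cases x y) as [|[c [_ Hc]]]; auto. exfalso; auto.
Qed.

Lemma dG_sym_le x y : (dG x y <= dG y x)%R.
Proof.
  destruct (dG_cases x y) as [->|[c [-> Hc]]]. apply dG_nonneg.
  apply dG_ge. intro C; apply Hc, RR_sym; auto.
Qed.

Lemma dG_tri x y z : (dG x z <= dG x y + dG y z)%R.
Proof.
  pose proof (dG_nonneg x y); pose proof (dG_nonneg y z).
  destruct (dG_cases x z) as [->|[c [-> Hc]]]. lra.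
  destruct (classic (RR c x y)) as [H1|H1].
  - destruct (classic (RR c y z)) as [H2|H2].
    + exfalso; apply Hc; eapply RR_trans; eauto.
    + apply dG_ge in H2; lra.
  - apply dG_ge in H1; lra.
Qed.

Lemma Ginf_cm : completely_metrizable Ginf.
Proof.
  exists dG. split; [|split; [|split; [|split; [|split; [|split]]]]].
  - intros; apply dG_nonneg.
  - intros x y Hx Hy; split.
    + intros H; rewrite dG_zero in H. apply functional_extensionality; intro i.
      apply (RR_agree (S i) x y); auto.
    + intros ->. apply dG_zero. intro n; apply RR_refl, Ginf_evs; auto.
  - intros; apply Rle_antisym; apply dG_sym_le.
  - intros; apply dG_tri.
  - intros x Hx eps He. destruct (half_small eps He) as [n Hn].
    destruct (Ginf_evs x Hx n) as [L HL]. exists L; intros y Hy Ha.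
    assert (RR n x y) by (exists L; auto). apply dG_lt in H; lra.
  - intros x Hx n. exists ((/2)^n)%R; split; [apply half_pos|].
    intros y Hy Hd. apply dG_lt in Hd. apply RR_agree; auto.
  - intros s Hs Hc.
    assert (HN : forall n, exists N, forall m k, (m >= N)%nat -> (k >= N)%nat -> RR n (s m) (s k)).
    { intros n. destruct (Hc ((/2)^n)%R (half_pos n)) as [N HN]. exists N; intros m k Hm Hk.
      apply dG_lt; auto. }
    set (N := fun n => proj1_sig (constructive_indefinite_description _ (HN n))).
    assert (HNs : forall n m k, (m >= N n)%nat -> (k >= N n)%nat -> RR n (s m) (s k)).
    { intros n; unfold N; destruct constructive_indefinite_description; simpl; auto. }
    set (l := fun i => s (N (S i)) i).
    assert (Hl : forall n, RR n (s (N n)) l).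
    { intros n.
      destruct (least_nat (fun L => (n <= evs (s (N n)) L)%nat)) as [L0 [HL0 HL0m]].
      { apply Ginf_evs, Hs. }
      assert (Hag : forall a, (a >= N n)%nat -> agree (s (N n)) (s a) L0).
      { intros a Ha. destruct (HNs n (N n) a (le_n _) Ha) as [L [A HL]].
        eapply agree_mono; [|exact A]. apply HL0m; auto. }
      exists L0; split; auto. intros i Hi.
      unfold l. set (b := Nat.max (N n) (N (S i))).
      rewrite (Hag b) by lia.
      apply (RR_agree (S i) (s b) (s (N (S i)))); [apply HNs; lia|lia]. }
    exists l. split.
    + apply evs_Ginf. intros n. destruct (RR_sym _ _ _ (Hl n)) as [L [A HL]]. eauto.
    + intros eps He. destruct (half_small eps He) as [n Hn]. exists (N n). intros k Hk.
      assert (RR n (s k) l) by (apply (RR_trans n (s k) (s (N n)) l); [apply HNs; lia|apply Hl]).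
      apply dG_lt in H; lra.
Qed.

Definition Fib (x0 : pt) (n0 : nat) (y : pt) :=
  agree x0 y n0 /\ forall i, (n0 <= i)%nat -> Nat.even i = false -> y i = false.

Definition Vm (w : pt) (l n0 m : nat) (y : pt) : Prop :=
  ~ agree w y l \/ (exists i, (n0 <= i)%nat /\ Nat.even i = false /\ y i = true)
  \/ (exists i, (l <= i < m)%nat /\ Nat.even i = true /\ y i = true).

Lemma Vm_open w l n0 m : Defs.open_set (Vm w l n0 m).
Proof.
  split; [intros y _; exact I|]. intros y [H|[(i&?&?&?)|(i&?&?&?)]].
  - exists l; intros z _ A; left; intro C; apply H. intros j Hj; rewrite C, A; auto.
  - exists (S i); intros z _ A; right; left; exists i; repeat split; auto. rewrite <- A; auto.
  - exists (S i); intros z _ A; right; right; exists i; repeat split; auto; try lia. rewrite <- A; auto.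
Qed.

Lemma Vm_mono w l n0 m m' y : (m <= m')%nat -> Vm w l n0 m y -> Vm w l n0 m' y.
Proof. intros H [A|[B|(i&?&?&?)]]; [left|right;left|right;right]; auto. exists i; repeat split; auto; lia. Qed.

Lemma list_max_ge (l : list nat) x : In x l -> (x <= list_max l)%nat.
Proof. intros H. pose proof (proj1 (list_max_le l (list_max l)) (le_n _)).
  rewrite Forall_forall in H0; auto. Qed.

Lemma step_sc (x0 : pt) (n0 : nat) (K : subspace) :
  Defs.compact K -> (forall y, K y -> SS y) ->
  forall w l, (n0 <= l)%nat -> Fib x0 n0 w ->
  exists w' l', (l < l')%nat /\ agree w w' l /\ Fib x0 n0 w' /\
    (exists e, (l <= e < l')%nat /\ Nat.even e = true /\ w' e = true) /\
    (forall y, Fib x0 n0 y -> agree w' y l' -> ~ K y).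
Proof.
  intros HK HKS w l Hl [Fw1 Fw2].
  destruct (HK nat (Vm w l n0) (Vm_open w l n0)) as [ms Hms].
  { intros y Ky. destruct (classic (agree w y l)) as [A|A]; [|exists 0%nat; left; auto].
    destruct (classic (exists i, (n0 <= i)%nat /\ Nat.even i = false /\ y i = true)) as [B|B].
    { exists 0%nat; right; left; auto. }
    destruct (HKS y Ky) as [G|[_ [N HN]]].
    - destruct (G l) as (i&?&?&?). exists (S i); right; right; exists i; repeat split; auto.
    - exfalso; apply B. exists (S (2*(Nat.max N n0))); repeat split; try lia.
      apply odd_double. apply HN; [lia|apply odd_double]. }
  set (M := list_max ms). set (e := (2*(M+l))%nat).
  exists (fun i => if i <? l then w i else (i =? e)), (S e).
  assert (He : Nat.even e = true) by apply even_double.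
  split; [lia|split; [|split; [split|split]]].
  - intros i Hi. apply Nat.ltb_lt in Hi; rewrite Hi; auto.
  - intros i Hi. assert (i <? l = true) by (apply Nat.ltb_lt; lia). rewrite H; auto.
  - intros i Hi Hev. destruct (i <? l); auto. apply Nat.eqb_neq. intros ->; congruence.
  - exists e; repeat split; try lia; auto. assert (e <? l = false) by (apply Nat.ltb_ge; lia).
    rewrite H; apply Nat.eqb_refl.
  - intros y [Fy1 Fy2] A Ky. destruct (Hms y Ky) as (m&Hm&Hv).
    apply (Vm_mono _ _ _ _ M) in Hv; [|apply list_max_ge; auto].
    destruct Hv as [C|[(i&?&?&?)|(i&?&?&?)]].
    + apply C. intros i Hi. rewrite <- A by lia. apply Nat.ltb_lt in Hi; rewrite Hi; auto.
    + rewrite Fy2 in H1; auto; discriminate.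
    + rewrite <- A in H1 by lia. assert (i <? l = false) by (apply Nat.ltb_ge; lia).
      rewrite H2 in H1. apply Nat.eqb_eq in H1. lia.
Qed.

Lemma nowhere_sc : nowhere sigma_compact SS.
Proof.
  split. { exists (fun _ => true); left; intro N; exists (2*N)%nat; split; [lia|split; [apply even_double|auto]]. }
  intros U [HUS HU] [x0 Ux0] [K [HK HKU]].
  destruct (HU x0 Ux0) as [n0 Hn0].
  assert (HKS : forall n y, K n y -> SS y) by (intros n y Hy; apply HUS, HKU; eauto).
  assert (Hstep : forall n (p : pt * nat), exists q : pt * nat,
    (n0 <= snd p)%nat -> Fib x0 n0 (fst p) ->
    (snd p < snd q)%nat /\ agree (fst p) (fst q) (snd p) /\ Fib x0 n0 (fst q) /\
    (exists e, (snd p <= e < snd q)%nat /\ Nat.even e = true /\ fst q e = true) /\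
    (forall y, Fib x0 n0 y -> agree (fst q) y (snd q) -> ~ K n y)).
  { intros n [w l]. destruct (classic ((n0 <= l)%nat /\ Fib x0 n0 w)) as [[H1 H2]|H].
    - destruct (step_sc x0 n0 (K n) (HK n) (HKS n) w l H1 H2) as (w'&l'&?).
      exists (w', l'); simpl; auto.
    - exists (w, l); intros; exfalso; auto. }
  set (F := fun n p => proj1_sig (constructive_indefinite_description _ (Hstep n p))).
  assert (HF : forall n p, (n0 <= snd p)%nat -> Fib x0 n0 (fst p) ->
    (snd p < snd (F n p))%nat /\ agree (fst p) (fst (F n p)) (snd p) /\ Fib x0 n0 (fst (F n p)) /\
    (exists e, (snd p <= e < snd (F n p))%nat /\ Nat.even e = true /\ fst (F n p) e = true) /\
    (forall y, Fib x0 n0 y -> agree (fst (F n p)) y (snd (F n p)) -> ~ K n y)).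
  { intros n p; unfold F; destruct constructive_indefinite_description; simpl; auto. }
  set (w0 := fun i => if i <? n0 then x0 i else false).
  assert (Fw0 : Fib x0 n0 w0).
  { split. intros i Hi; unfold w0; apply Nat.ltb_lt in Hi; rewrite Hi; auto.
    intros i Hi _; unfold w0; assert (i <? n0 = false) by (apply Nat.ltb_ge; lia); rewrite H; auto. }
  set (sq := fix sq (n:nat) : pt * nat := match n with 0 => (w0, n0) | S n => F n (sq n) end).
  assert (sq0 : sq 0%nat = (w0, n0)) by reflexivity.
  assert (sqS : forall n, sq (S n) = F n (sq n)) by reflexivity.
  clearbody sq. clearbody F.
  assert (Inv : forall n, (n0 + n <= snd (sq n))%nat /\ Fib x0 n0 (fst (sq n))).
  { induction n. rewrite sq0; split; [simpl; lia|exact Fw0].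
    destruct IHn as [I1 I2]. rewrite sqS.
    destruct (HF n (sq n)) as (?&?&?&?&?); [lia|auto|].
    split; auto; lia. }
  assert (HS : forall n, (snd (sq n) < snd (sq (S n)))%nat /\ agree (fst (sq n)) (fst (sq (S n))) (snd (sq n)) /\
     (exists e, (snd (sq n) <= e < snd (sq (S n)))%nat /\ Nat.even e = true /\ fst (sq (S n)) e = true) /\
    (forall y, Fib x0 n0 y -> agree (fst (sq (S n))) y (snd (sq (S n))) -> ~ K n y)).
  { intros n; destruct (Inv n) as [I1 I2]; rewrite sqS;
    destruct (HF n (sq n)) as (?&?&?&?&?); [lia|auto|]; auto. }
  assert (Lmono : forall n m, (n <= m)%nat -> (snd (sq n) <= snd (sq m))%nat).
  { induction 1; auto. pose proof (proj1 (HS m)); lia. }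
  assert (Coh : forall n m, (n <= m)%nat -> agree (fst (sq n)) (fst (sq m)) (snd (sq n))).
  { induction 1. intros i _; reflexivity.
    apply (agree_trans _ (fst (sq m))); auto. apply (agree_mono _ _ _ (snd (sq m))); [apply Lmono; auto|apply HS]. }
  set (z := fun i => fst (sq (S i)) i).
  assert (Hz : forall n, agree (fst (sq n)) z (snd (sq n))).
  { intros n i Hi. unfold z. set (m := Nat.max n (S i)).
    rewrite (Coh n m) by lia. symmetry. apply (Coh (S i) m); [lia|].
    destruct (Inv (S i)); lia. }
  assert (Fz : Fib x0 n0 z).
  { split.
    - apply (agree_trans _ w0). apply Fw0. pose proof (Hz 0%nat); rewrite sq0 in H; simpl in H; auto.
    - intros i Hi He. unfold z. apply (proj2 (Inv (S i))); auto. }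
  assert (Gz : Ginf z).
  { intros N. destruct (HS N) as (_&_&(e&He1&He2&He3)&_). exists e; repeat split; auto.
    destruct (Inv N); lia. rewrite <- (Hz (S N)); auto; lia. }
  assert (Uz : U z) by (apply Hn0; [left; auto|apply Fz]).
  apply HKU in Uz. destruct Uz as [n Kn].
  destruct (HS n) as (_&_&_&Hk). apply (Hk z Fz (Hz (S n))); auto.
Qed.

Definition Qs (x0 : pt) (n0 : nat) (y : pt) :=
  agree x0 y n0 /\ (forall i, (n0 <= i)%nat -> Nat.even i = true -> y i = false) /\
  (exists N, forall i, (N <= i)%nat -> Nat.even i = false -> y i = true).

Lemma Qs_SS x0 n0 y : Qs x0 n0 y -> SS y.
Proof. intros (_&H1&H2); right; split; eauto. Qed.

Lemma nowhere_cm : nowhere completely_metrizable SS.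
Proof.
  split. { exists (fun _ => true); left; intro N; exists (2*N)%nat; split; [lia|split; [apply even_double|auto]]. }
  intros U [HUS HU] [x0 Ux0] (d&Dnn&Dz&Dsym&Dtri&Dt1&Dt2&Dc).
  destruct (HU x0 Ux0) as [n0 Hn0].
  assert (QU : forall y, Qs x0 n0 y -> U y) by (intros y Hy; apply Hn0; [eapply Qs_SS; eauto|apply Hy]).
  assert (Hstep : forall k (p : pt * nat), exists q : pt * nat,
     Qs x0 n0 (fst p) -> (n0 <= snd p)%nat ->
     Qs x0 n0 (fst q) /\ agree (fst p) (fst q) (snd p) /\ (snd p < snd q)%nat /\
     (d (fst p) (fst q) < (/2)^k)%R /\
     (exists q0, (snd p <= q0 < snd q)%nat /\ Nat.even q0 = false /\ fst q q0 = false)).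
  { intros k [y m]. simpl.
    destruct (classic (Qs x0 n0 y /\ (n0 <= m)%nat)) as [[Qy Hm]|H]; [|exists (y, m); intros; exfalso; auto].
    destruct (Dt1 y (QU y Qy) ((/2)^k)%R (half_pos k)) as [n1 Hn1].
    set (p := S (2 * Nat.max m n1)).
    set (y' := fun i => if i <? p then y i else if i =? p then false else negb (Nat.even i)).
    assert (Ay : agree y y' p) by (intros i Hi; unfold y'; apply Nat.ltb_lt in Hi; rewrite Hi; auto).
    assert (Qy' : Qs x0 n0 y').
    { destruct Qy as (Q1&Q2&Q3). split; [|split].
      - apply (agree_trans _ y); auto. apply (agree_mono _ _ _ p); auto. unfold p; lia.
      - intros i Hi He. unfold y'. destruct (i <? p); auto. destruct (i =? p) eqn:E; auto.
        rewrite He; auto.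
      - exists (S p); intros i Hi He. unfold y'.
        assert (i <? p = false) by (apply Nat.ltb_ge; lia). assert (i =? p = false) by (apply Nat.eqb_neq; lia).
        rewrite H, H0, He; auto. }
    exists (y', S p); simpl; intros _ _. split; auto. split; [apply (agree_mono _ _ _ p); auto; unfold p; lia|].
    split; [lia|split].
    - apply Hn1; [apply QU; auto|]. apply (agree_mono _ _ _ p); auto; unfold p; lia.
    - exists p; split; [unfold p; lia|split; [apply odd_double|]].
      unfold y'. rewrite Nat.ltb_irrefl, Nat.eqb_refl; auto. }
  set (F := fun n p => proj1_sig (constructive_indefinite_description _ (Hstep n p))).
  assert (HF : forall k p, Qs x0 n0 (fst p) -> (n0 <= snd p)%nat ->
     Qs x0 n0 (fst (F k p)) /\ agree (fst p) (fst (F k p)) (snd p) /\ (snd p < snd (F k p))%nat /\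
     (d (fst p) (fst (F k p)) < (/2)^k)%R /\
     (exists q0, (snd p <= q0 < snd (F k p))%nat /\ Nat.even q0 = false /\ fst (F k p) q0 = false)).
  { intros n p; unfold F; destruct constructive_indefinite_description; simpl; auto. }
  set (y0 := fun i => if i <? n0 then x0 i else negb (Nat.even i)).
  assert (Qy0 : Qs x0 n0 y0).
  { split; [|split].
    - intros i Hi; unfold y0; apply Nat.ltb_lt in Hi; rewrite Hi; auto.
    - intros i Hi He; unfold y0; assert (i <? n0 = false) by (apply Nat.ltb_ge; lia); rewrite H, He; auto.
    - exists n0; intros i Hi He; unfold y0; assert (i <? n0 = false) by (apply Nat.ltb_ge; lia); rewrite H, He; auto. }
  set (sq := fix sq (n:nat) : pt * nat := match n with 0 => (y0, n0) | S n => F n (sq n) end).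
  assert (sq0 : sq 0%nat = (y0, n0)) by reflexivity.
  assert (sqS : forall n, sq (S n) = F n (sq n)) by reflexivity.
  clearbody sq. clearbody F.
  assert (Inv : forall n, (n0 + n <= snd (sq n))%nat /\ Qs x0 n0 (fst (sq n))).
  { induction n. rewrite sq0; split; [simpl; lia|exact Qy0].
    destruct IHn as [I1 I2]. rewrite sqS.
    destruct (HF n (sq n)) as (?&?&?&?&?); [auto|lia|].
    split; auto; lia. }
  assert (HS : forall n, agree (fst (sq n)) (fst (sq (S n))) (snd (sq n)) /\ (snd (sq n) < snd (sq (S n)))%nat /\
     (d (fst (sq n)) (fst (sq (S n))) < (/2)^n)%R /\
     (exists q0, (snd (sq n) <= q0 < snd (sq (S n)))%nat /\ Nat.even q0 = false /\ fst (sq (S n)) q0 = false)).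
  { intros n; destruct (Inv n) as [I1 I2]; rewrite sqS;
    destruct (HF n (sq n)) as (?&?&?&?&?); [auto|lia|]; auto. }
  set (s := fun n => fst (sq n)).
  assert (Us : forall n, U (s n)) by (intros n; apply QU, Inv).
  assert (Lmono : forall n m, (n <= m)%nat -> (snd (sq n) <= snd (sq m))%nat).
  { induction 1; auto. pose proof (proj1 (proj2 (HS m))); lia. }
  assert (Coh : forall n m, (n <= m)%nat -> agree (s n) (s m) (snd (sq n))).
  { induction 1. intros i _; reflexivity.
    apply (agree_trans _ (s m)); auto. apply (agree_mono _ _ _ (snd (sq m))); [apply Lmono; auto|apply HS]. }
  assert (Bd : forall k j, (k <= j)%nat -> (d (s k) (s j) <= 2 * (/2)^k - 2 * (/2)^j)%R).
  { intros k j H; induction H.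
    - assert (d (s k) (s k) = 0%R) by (apply Dz; auto). lra.
    - pose proof (Dtri (s k) (s m) (s (S m)) (Us _) (Us _) (Us _)).
      pose proof (proj1 (proj2 (proj2 (HS m)))). fold (s m) in H1. fold (s (S m)) in H1.
      simpl pow in *. lra. }
  destruct (Dc s Us) as [l [Ul Hl]].
  { intros eps He. destruct (half_small (eps/2)) as [N HN]; [lra|]. exists N. intros m k Hm Hk.
    assert (forall a b, (N <= a <= b)%nat -> (d (s a) (s b) < eps)%R).
    { intros a b [Ha Hb]. pose proof (Bd a b Hb). pose proof (half_le N a Ha). pose proof (half_pos b). lra. }
    destruct (Nat.le_ge_cases m k); [apply H; lia|]. rewrite Dsym by auto. apply H; lia. }
  assert (Ev : forall n, exists K, forall k, (k >= K)%nat -> agree l (s k) n).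
  { intros n. destruct (Dt2 l Ul n) as [eps [He Heps]]. destruct (Hl eps He) as [K HK].
    exists K; intros k Hk. apply Heps; auto. rewrite Dsym by auto. apply HK; auto. }
  assert (Al : forall n, agree l (s n) (snd (sq n))).
  { intros n. destruct (Ev (snd (sq n))) as [K HK]. apply (agree_trans _ (s (Nat.max K n))).
    apply HK; lia. apply agree_sym, Coh; lia. }
  assert (SSl : SS l) by (apply HUS; auto).
  destruct SSl as [G|[_ [N HN]]].
  - destruct (G n0) as (i&Hi&He&Hli).
    destruct (Ev (S i)) as [K HK]. rewrite (HK K (le_n _)) in Hli by lia.
    pose proof (proj1 (proj2 (proj2 (Inv K))) i Hi He) as Z. change (fst (sq K)) with (s K) in Z.
    congruence.
  - destruct (HS N) as (_&_&_&(q0&Hq&Hq1&Hq2)).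
    change (fst (sq (S N))) with (s (S N)) in Hq2.
    rewrite <- (Al (S N)) in Hq2 by lia. rewrite HN in Hq2; auto; [discriminate|].
    destruct (Inv N); lia.
Qed.

Theorem proposition5p4 : exists S : subspace, semifilter S /\ is_T S.
Proof.
  exists SS. split; [apply sf|]. split; [apply zd|]. split; [|split; [apply nowhere_sc|apply nowhere_cm]].
  exists Ginf, Ccof. split; [apply Ginf_cm|split; [apply ccount|]].
  intros x; unfold SS; tauto.
Qed.
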